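(* Let $\kappa_0=(\xi_0,\eta_0),\kappa_1=(\xi_1,\eta_1)\in S\mathbb{H}$. Then $\phi_1(\kappa_0)=\phi_1(\kappa_1)$ if and only if $\kappa_0=\kappa_1\alpha$ for some $\alpha\in\mathbb{H}$ with $|\alpha|=1$.
   Context: For $q=a+bi+cj+dk\in\mathbb{H}$, $\bar q=a-bi-cj-dk$. $\mathcal{V}=\mathrm{span}_\mathbb{R}\{1,i,j\}$. $S\mathbb{H}=\{(\xi,\eta)\in\mathbb{H}^2\setminus\{(0,0)\}:\xi\bar\eta\in\mathcal{V}\}$; $(\xi,\eta)\alpha=(\xi\alpha,\eta\alpha)$. The map $\phi_1$ sends $\kappa$ (a column) to the $2\times2$ quaternionic matrix $\kappa\bar\kappa^T=\begin{pmatrix}|\xi|^2&\xi\bar\eta\\ \eta\bar\xi&|\eta|^2\end{pmatrix}$. *)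

(* Defs.v *)
(* Real quaternions H = R^4 over a real closed field R
   (e.g. the reals), with the Hamilton product. *)
From HB Require Import structures.
From mathcomp Require Import all_boot all_order all_algebra.
Set Implicit Arguments. Unset Strict Implicit. Unset Printing Implicit Defensive.
Import Order.TTheory GRing.Theory Num.Theory.
Local Open Scope ring_scope.

(* q = a + b i + c j + d k *)
Record quat (R : rcfType) := Quat { qa : R; qb : R; qc : R; qd : R }.

Section Quat.
Variable R : rcfType.

Definition qzero : quat R := Quat 0 0 0 0.

Definition qmul (p q : quat R) : quat R :=
  Quat (qa p * qa q - qb p * qb q - qc p * qc q - qd p * qd q)
       (qa p * qb q + qb p * qa q + qc p * qd q - qd p * qc q)
       (qa p * qc q - qb p * qd q + qc p * qa q + qd p * qb q)
       (qa p * qd q + qb p * qc q - qc p * qb q + qd p * qa q).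

Definition qconj (q : quat R) : quat R := Quat (qa q) (- qb q) (- qc q) (- qd q).

Definition qnorm (q : quat R) : R :=
  Num.sqrt (qa q ^+ 2 + qb q ^+ 2 + qc q ^+ 2 + qd q ^+ 2).

Definition inV (q : quat R) : Prop := qd q = 0.

Definition SH (kappa : quat R * quat R) : Prop :=
  kappa <> (qzero, qzero) /\ inV (qmul kappa.1 (qconj kappa.2)).

Definition ract (kappa : quat R * quat R) (alpha : quat R) : quat R * quat R :=
  (qmul kappa.1 alpha, qmul kappa.2 alpha).

Definition kcol (kappa : quat R * quat R) (i : 'I_2) : quat R :=
  if val i == 0%N then kappa.1 else kappa.2.

Definition phi1 (kappa : quat R * quat R) : 'M[quat R]_(2, 2) :=
  \matrix_(i < 2, j < 2) qmul (kcol kappa i) (qconj (kcol kappa j)).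

End Quat.

(* Main.v *)
Require Import Defs.
From mathcomp Require Import all_boot all_order all_algebra.
From mathcomp Require Import ring lra.
Set Implicit Arguments. Unset Strict Implicit. Unset Printing Implicit Defensive.
Import Order.TTheory GRing.Theory Num.Theory.
Local Open Scope ring_scope.

Section Aux.
Variable R : rcfType.
Implicit Types p q r : quat R.

Definition nsq p : R := qa p ^+ 2 + qb p ^+ 2 + qc p ^+ 2 + qd p ^+ 2.
Definition qsc (c : R) p : quat R := Quat (c * qa p) (c * qb p) (c * qc p) (c * qd p).

Lemma quatE p q : qa p = qa q -> qb p = qb q -> qc p = qc q -> qd p = qd q -> p = q.
Proof. by case: p; case: q => /= ? ? ? ? ? ? ? ? -> -> -> ->. Qed.

Ltac qsolve := apply: quatE; rewrite /= ; ring.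

Lemma qmulA p q r : qmul p (qmul q r) = qmul (qmul p q) r.
Proof. rewrite /qmul; qsolve. Qed.

Lemma qconj_mul p q : qconj (qmul p q) = qmul (qconj q) (qconj p).
Proof. rewrite /qmul /qconj; qsolve. Qed.

Lemma qconjK p : qconj (qconj p) = p.
Proof. rewrite /qconj; qsolve. Qed.

Lemma qmul_conjr p : qmul p (qconj p) = Quat (nsq p) 0 0 0.
Proof. rewrite /qmul /qconj /nsq; qsolve. Qed.

Lemma qmul_conjl p : qmul (qconj p) p = Quat (nsq p) 0 0 0.
Proof. rewrite /qmul /qconj /nsq; qsolve. Qed.

Lemma qmul_scr c p q : qmul p (qsc c q) = qsc c (qmul p q).
Proof. rewrite /qmul /qsc; qsolve. Qed.

Lemma qmul_realr c p : qmul p (Quat c 0 0 0) = qsc c p.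
Proof. rewrite /qmul /qsc; qsolve. Qed.

Lemma qmul_reall c p : qmul (Quat c 0 0 0) p = qsc c p.
Proof. rewrite /qmul /qsc; qsolve. Qed.

Lemma qsc_mul c d p : qsc c (qsc d p) = qsc (c * d) p.
Proof. rewrite /qsc; qsolve. Qed.

Lemma qsc1 p : qsc 1 p = p.
Proof. rewrite /qsc; qsolve. Qed.

Lemma nsq_mul p q : nsq (qmul p q) = nsq p * nsq q.
Proof. rewrite /nsq /qmul /=; ring. Qed.

Lemma nsq_conj p : nsq (qconj p) = nsq p.
Proof. rewrite /nsq /qconj /=; ring. Qed.

Lemma nsq_sc c p : nsq (qsc c p) = c ^+ 2 * nsq p.
Proof. rewrite /nsq /qsc /=; ring. Qed.

Lemma nsq_ge0 p : 0 <= nsq p.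
Proof. rewrite /nsq; apply: addr_ge0; [apply: addr_ge0; [apply: addr_ge0|]|]; exact: sqr_ge0. Qed.

Lemma nsq_eq0 p : nsq p = 0 -> p = qzero R.
Proof.
rewrite /nsq => H.
have a0 : qa p ^+ 2 = 0 by nra.
have b0 : qb p ^+ 2 = 0 by nra.
have c0 : qc p ^+ 2 = 0 by nra.
have d0 : qd p ^+ 2 = 0 by nra.
apply: quatE => /=; apply/eqP; rewrite -sqrf_eq0; apply/eqP; done.
Qed.

Lemma qnorm_nsq p : (qnorm p = 1) <-> (nsq p = 1).
Proof.
rewrite /qnorm -/(nsq p); split => H.
  by have := sqr_sqrtr (nsq_ge0 p); rewrite H expr1n => <-.
by rewrite H sqrtr1.
Qed.

Lemma key x0 y0 x1 y1 :
  qmul x0 (qconj x0) = qmul x1 (qconj x1) ->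
  qmul y0 (qconj x0) = qmul y1 (qconj x1) ->
  nsq x1 != 0 ->
  exists alpha, nsq alpha = 1 /\ x0 = qmul x1 alpha /\ y0 = qmul y1 alpha.
Proof.
move=> H0 H1 N.
have E : nsq x0 = nsq x1 by move: H0; rewrite !qmul_conjr => -[].
exists (qsc (nsq x1)^-1 (qmul (qconj x1) x0)); split; [|split].
- rewrite nsq_sc nsq_mul nsq_conj E; field; done.
- rewrite qmul_scr qmulA qmul_conjr qmul_reall qsc_mul mulVf // qsc1 //.
- rewrite qmul_scr qmulA -H1 -qmulA qmul_conjl qmul_realr qsc_mul E mulVf // qsc1 //.
Qed.

End Aux.

Theorem lemma4p4 (R : rcfType) (kappa0 kappa1 : quat R * quat R) :
  SH kappa0 -> SH kappa1 ->
  (phi1 kappa0 = phi1 kappa1 <->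
   exists alpha : quat R, qnorm alpha = 1 /\ kappa0 = ract kappa1 alpha).
Proof.
case: kappa0 => x0 y0; case: kappa1 => x1 y1 [nz0 _] [nz1 _]; split.
- move=> E.
  have e := fun i j => congr1 (fun M : 'M[quat R]_2 => M i j) E.
  have e00 := e ord0 ord0; have e01 := e ord0 ord_max.
  have e10 := e ord_max ord0; have e11 := e ord_max ord_max.
  rewrite !mxE /kcol /= in e00 e01 e10 e11.
  have [N1|N1] := boolP (nsq x1 != 0).
    have [a [Ha [Hx Hy]]] := key e00 e10 N1.
    by exists a; rewrite qnorm_nsq; split => //; rewrite /ract /= -Hx -Hy.
  move/negPn/eqP: N1 => N1.
  have X1 := nsq_eq0 N1.
  have N0 : nsq x0 = 0.
    by move: e00; rewrite !qmul_conjr N1 => -[].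
  have X0 := nsq_eq0 N0.
  have N1' : nsq y1 != 0.
    apply/eqP => /nsq_eq0 Y1; apply: nz1; by rewrite X1 Y1.
  have [a [Ha [Hx Hy]]] := key e11 e01 N1'.
  by exists a; rewrite qnorm_nsq; split => //; rewrite /ract /= -Hx -Hy.
- case=> a [/qnorm_nsq Ha [-> ->]].
  apply/matrixP => i j; rewrite !mxE /kcol /=.
  have P u v : qmul (qmul u a) (qconj (qmul v a)) = qmul u (qconj v).
    rewrite qconj_mul -!qmulA [qmul a _]qmulA qmul_conjr Ha.
    by rewrite qmul_reall qsc1.
  by case: (val i == 0%N); case: (val j == 0%N); rewrite P.
Qed.
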